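(* A category $C$ is Möbius if and only if the following three conditions hold: (1) $\mathrm{PD}_2f$ is finite for every morphism $f$; (2) no identity morphism admits a proper decomposition of length $n\ge2$; (3) if a morphism $f$ fixes some morphism $g$ (i.e. $fg=g$ or $gf=g$), then $f$ is an identity morphism.
   Context: For a morphism $f$ and $n\ge1$, an $n$-decomposition of $f$ is a tuple $(f_1,\dots,f_n)$ of composable morphisms with $f_n\cdots f_1=f$; $\mathrm{D}_nf$ is the set of them. For $n\ge2$, $\mathrm{PD}_nf$ is the set of proper $n$-decompositions (none of the $f_i$ is an identity); $\mathrm{PD}_1f=\{f\}$ and $\mathrm{PD}f=\bigsqcup_{n\ge1}\mathrm{PD}_nf$. A category is Möbius if $\mathrm{PD}f$ is finite for every morphism $f$. *)

(* Defs.v *)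
From Stdlib Require Import List Arith.
Import ListNotations.

Record Category : Type := {
  Ob : Type;
  Hom : Ob -> Ob -> Type;
  idm : forall a : Ob, Hom a a;
  comp : forall a b c : Ob, Hom b c -> Hom a b -> Hom a c;
  comp_id_l : forall a b (f : Hom a b), comp a b b (idm b) f = f;
  comp_id_r : forall a b (f : Hom a b), comp a a b f (idm a) = f;
  comp_assoc : forall a b c d (h : Hom c d) (g : Hom b c) (f : Hom a b),
      comp a c d h (comp a b c g f) = comp a b d (comp b c d h g) f
}.

Arguments idm {_} a.
Arguments comp {_ _ _ _} _ _.

Definition is_identity {C : Category} {x y : Ob C} (f : Hom C x y) : Prop :=
  existT (fun p : Ob C * Ob C => Hom C (fst p) (snd p)) (x, y) f
  = existT (fun p : Ob C * Ob C => Hom C (fst p) (snd p)) (x, x) (idm x).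

(* A chain of composable morphisms from a to b, written last-first:
   pcons f_n (... (pcons f_1 pnil)) represents the tuple (f_1, ..., f_n). *)
Inductive chain {C : Category} (a : Ob C) : Ob C -> Type :=
| pnil : chain a a
| pcons : forall b c : Ob C, Hom C b c -> chain a b -> chain a c.

Arguments pnil {C a}.
Arguments pcons {C a b c} _ _.

Fixpoint clength {C : Category} {a b : Ob C} (p : chain a b) : nat :=
  match p with
  | pnil => 0
  | pcons _ q => S (clength q)
  end.

Fixpoint ccomp {C : Category} {a b : Ob C} (p : chain a b) : Hom C a b :=
  match p with
  | pnil => idm a
  | pcons g q => comp g (ccomp q)
  end.

Fixpoint all_nonidentity {C : Category} {a b : Ob C} (p : chain a b) : Prop :=
  match p with
  | pnil => True
  | pcons g q => ~ is_identity g /\ all_nonidentity q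
  end.

Definition in_D {C : Category} {a b : Ob C} (n : nat) (f : Hom C a b)
  (p : chain a b) : Prop :=
  clength p = n /\ ccomp p = f.

(* PD_n f : for n >= 2 proper decompositions; PD_1 f = {f}; PD_0 empty *)
Definition in_PDn {C : Category} {a b : Ob C} (n : nat) (f : Hom C a b)
  (p : chain a b) : Prop :=
  1 <= n /\ in_D n f p /\ (n = 1 \/ all_nonidentity p).

Definition in_PD {C : Category} {a b : Ob C} (f : Hom C a b)
  (p : chain a b) : Prop :=
  exists n, in_PDn n f p.

Definition finite_set {T : Type} (P : T -> Prop) : Prop :=
  exists l : list T, forall x, P x -> In x l.

Definition Moebius (C : Category) : Prop :=
  forall (a b : Ob C) (f : Hom C a b), finite_set (in_PD f).

(* Main.v *)
Require Import Defs.
From Stdlib Require Import List Arith.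
From Stdlib Require Import Lia Classical Eqdep.
Import ListNotations.

Lemma chain_S {C : Category} {a b : Ob C} (p : chain a b) n :
  clength p = S n -> exists k (g : Hom C k b) (q : chain a k), p = pcons g q /\ clength q = n.
Proof. destruct p; simpl; intro H; [discriminate|]. injection H; intro. eauto. Qed.

Lemma nonid_ccomp {C : Category}
  (H2 : forall (a : Ob C) (n : nat) (p : chain a a), 2 <= n -> ~ in_PDn n (idm a) p) :
  forall (m m' : Ob C) (q : chain m m'), all_nonidentity q -> 1 <= clength q -> ~ is_identity (ccomp q).
Proof.
  intros m m' q Hq Hl Hid.
  destruct q as [|k m'' g q0]; simpl in Hl; [lia|].
  destruct q0 as [|k' k'' g' q1].
  - simpl in Hid. rewrite comp_id_r in Hid. simpl in Hq. tauto.
  - unfold is_identity in Hid.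
    assert (E : m'' = m) by exact (f_equal (fun u => snd (projT1 u)) Hid).
    subst m''.
    apply inj_pair2 in Hid.
    apply (H2 m (clength (pcons g (pcons g' q1)) ) (pcons g (pcons g' q1))); [simpl; lia|].
    split; [simpl; lia|]. split; [split; [reflexivity| exact Hid]|]. right; exact Hq.
Qed.

Lemma fixlem {C : Category}
  (H3 : forall (x y : Ob C) (f : Hom C y y) (g : Hom C x y), comp f g = g -> is_identity f)
  (a k m : Ob C) (s : Hom C a k) (T : Hom C k m) :
  existT (fun x => Hom C a x) m (comp T s) = existT _ k s -> is_identity T.
Proof.
  intro E. assert (m = k) by exact (f_equal (@projT1 _ _) E). subst m.
  apply inj_pair2 in E. eapply H3; exact E.
Qed.

Fixpoint cpre {C : Category} {m' m b : Ob C} (g : Hom C m' m) (r : chain m b) {struct r} : chain m' b :=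
  match r in chain _ b0 return chain m' b0 with
  | pnil => pcons g pnil
  | pcons h r' => pcons h (cpre g r')
  end.

Lemma ccomp_cpre {C : Category} {m' m b : Ob C} (g : Hom C m' m) (r : chain m b) :
  ccomp (cpre g r) = comp (ccomp r) g.
Proof.
  induction r; simpl.
  - rewrite comp_id_r, comp_id_l. reflexivity.
  - rewrite IHr, comp_assoc. reflexivity.
Qed.

Lemma clength_cpre {C : Category} {m' m b : Ob C} (g : Hom C m' m) (r : chain m b) :
  clength (cpre g r) = S (clength r).
Proof. induction r; simpl; auto. Qed.

Lemma nonid_cpre {C : Category} {m' m b : Ob C} (g : Hom C m' m) (r : chain m b) :
  ~ is_identity g -> all_nonidentity r -> all_nonidentity (cpre g r).
Proof. induction r; simpl; tauto. Qed.

Fixpoint splits {C : Category} {a m b : Ob C} (q : chain a m) : chain m b -> list (chain a b) :=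
  match q in chain _ m0 return chain m0 b -> list (chain a b) with
  | pnil => fun _ => []
  | pcons g q' => fun r => pcons (ccomp r) (pcons (ccomp (pcons g q')) pnil) :: splits q' (cpre g r)
  end.

Definition snd_of {C : Category} {a b : Ob C} (c : chain a b) : {k : Ob C & Hom C a k} :=
  match c with
  | pnil => existT _ a (idm a)
  | pcons _ q => existT _ _ (ccomp q)
  end.

Lemma splits_len {C : Category} {a m b : Ob C} (q : chain a m) :
  forall r : chain m b, length (splits q r) = clength q.
Proof. induction q; intro r; simpl; auto. Qed.

Lemma splits_snd {C : Category} {a m b : Ob C} (q : chain a m) :
  forall (r : chain m b) c, In c (splits q r) -> all_nonidentity q ->
  exists k (tc : chain k m) (s : Hom C a k), snd_of c = existT _ k s /\
     ccomp q = comp (ccomp tc) s /\ all_nonidentity tc.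
Proof.
  induction q as [|k m0 g q' IH]; intros r c Hin Hq; simpl in Hin.
  - contradiction.
  - destruct Hin as [<-|Hin].
    + exists m0, pnil, (comp (ccomp (pcons g q')) (idm a)). split; [reflexivity|].
      split; [|exact I]. simpl. rewrite comp_id_l, comp_id_r. reflexivity.
    + destruct Hq as [Hg Hq'].
      destruct (IH _ _ Hin Hq') as [k2 [tc [s [E1 [E2 E3]]]]].
      exists k2, (pcons g tc), s. split; [exact E1|]. split; [|simpl; tauto].
      simpl. rewrite E2, comp_assoc. reflexivity.
Qed.

Lemma splits_nodup {C : Category}
  (H2 : forall (a : Ob C) (n : nat) (p : chain a a), 2 <= n -> ~ in_PDn n (idm a) p)
  (H3 : forall (x y : Ob C) (f : Hom C y y) (g : Hom C x y), comp f g = g -> is_identity f)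
  {a m b : Ob C} (q : chain a m) :
  forall r : chain m b, all_nonidentity q -> NoDup (splits q r).
Proof.
  induction q as [|k m0 g q' IH]; intros r Hq; simpl.
  - constructor.
  - destruct Hq as [Hg Hq']. constructor; [|apply IH; exact Hq'].
    intro Hin.
    destruct (splits_snd q' _ _ Hin Hq') as [k2 [tc [s [E1 [E2 E3]]]]].
    simpl in E1. rewrite E2, comp_id_r, comp_assoc in E1.
    apply (fixlem H3) in E1.
    apply (nonid_ccomp H2 _ _ (pcons g tc)); [simpl; tauto | simpl; lia | exact E1].
Qed.

Lemma splits_PD2 {C : Category}
  (H2 : forall (a : Ob C) (n : nat) (p : chain a a), 2 <= n -> ~ in_PDn n (idm a) p)
  {a m b : Ob C} (q : chain a m) :
  forall (r : chain m b) c, In c (splits q r) -> all_nonidentity q -> all_nonidentity r ->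
    1 <= clength r -> in_PDn 2 (comp (ccomp r) (ccomp q)) c.
Proof.
  induction q as [|k m0 g q' IH]; intros r c Hin Hq Hr Hl; simpl in Hin.
  - contradiction.
  - destruct Hin as [<-|Hin].
    + split; [lia|]. split; [split; [reflexivity|]|].
      * simpl. rewrite comp_id_r. reflexivity.
      * right. simpl. split; [apply nonid_ccomp; auto|].
        split; [|exact I].
        apply (nonid_ccomp H2 _ _ (pcons g q')); [exact Hq | simpl; lia].
    + destruct Hq as [Hg Hq'].
      specialize (IH (cpre g r) c Hin Hq' (nonid_cpre g r Hg Hr)).
      rewrite clength_cpre, ccomp_cpre in IH.
      simpl. rewrite comp_assoc. apply IH. lia.
Qed.

Lemma PD_bound {C : Category}
  (H2 : forall (a : Ob C) (n : nat) (p : chain a a), 2 <= n -> ~ in_PDn n (idm a) p)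
  (H3 : forall (x y : Ob C) (f : Hom C y y) (g : Hom C x y), comp f g = g -> is_identity f)
  {a b : Ob C} (f : Hom C a b) (L : list (chain a b))
  (HL : forall p, in_PDn 2 f p -> In p L) n p :
  in_PDn n f p -> n <= S (length L).
Proof.
  intros [Hn [[Hlen Hcc] Hor]].
  destruct Hor as [->|Hne]; [lia|].
  destruct n as [|n]; [lia|].
  destruct (chain_S p n Hlen) as [k [g [q [-> Hq]]]].
  destruct Hne as [Hg Hqn].
  destruct n as [|n]; [lia|].
  assert (length (splits q (pcons g pnil)) <= length L).
  { apply NoDup_incl_length; [apply splits_nodup; auto|].
    intros c Hc. apply HL.
    pose proof (splits_PD2 H2 q (pcons g pnil) c Hc Hqn) as HH.
    simpl in HH. rewrite comp_id_r in HH. simpl in Hcc. rewrite <- Hcc.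
    apply HH; simpl; auto. }
  rewrite splits_len in H. lia.
Qed.

Definition top2 {C : Category} {a b : Ob C} (p : chain a b) : chain a b :=
  match p with
  | pnil => pnil
  | pcons g q => pcons g (pcons (ccomp q) pnil)
  end.

Definition dec {C : Category} {a b : Ob C} (c : chain a b) :
  option {k : Ob C & (Hom C k b * chain a k)%type} :=
  match c with
  | pnil => None
  | pcons g q => Some (existT _ _ (g, q))
  end.

Lemma PDn_fin {C : Category}
  (H1 : forall (a b : Ob C) (f : Hom C a b), finite_set (in_PDn 2 f))
  (H2 : forall (a : Ob C) (n : nat) (p : chain a a), 2 <= n -> ~ in_PDn n (idm a) p) :
  forall n (a b : Ob C) (f : Hom C a b), 1 <= n -> finite_set (in_PDn n f).
Proof.
  induction n as [|m IHm]; intros a b f Hn; [lia|].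
  destruct m as [|m'].
  - exists [pcons f pnil]. intros p [_ [[Hlen Hcc] _]].
    destruct (chain_S p 0 Hlen) as [k [g [q [-> Hq]]]].
    destruct q as [|k1 k2 g1 q1]; [|discriminate].
    simpl in Hcc. rewrite comp_id_r in Hcc. subst g. left. reflexivity.
  - destruct m' as [|m'']; [apply H1|].
    set (m := S (S m'')) in *.
    assert (IH : forall (a b : Ob C) (f : Hom C a b), finite_set (in_PDn m f)) by (intros; apply IHm; lia).
    destruct (H1 a b f) as [L2 HL2].
    assert (Hc : forall c : chain a b, exists lc, forall p, in_PDn (S m) f p -> top2 p = c -> In p lc).
    { intro c.
      destruct (classic (exists k (g : Hom C k b) (c1 : chain a k), c = pcons g c1)) as [Hex|Hnex].
      - destruct Hex as [k [g [c1 ->]]].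
        destruct (IH _ _ (ccomp c1)) as [lq Hlq].
        exists (map (fun q => pcons g q) lq).
        intros p [_ [[Hlen Hcc] Hor]] Ht.
        destruct (chain_S p m Hlen) as [k' [g' [q' [-> Hq']]]].
        simpl in Ht.
        pose proof (f_equal dec Ht) as E. simpl in E. injection E as E H H0.
        subst k'. apply inj_pair2 in H. apply inj_pair2 in H0. subst g' c1.
        apply in_map. apply Hlq. simpl. rewrite comp_id_r.
        split; [lia|]. split; [split; auto|].
        destruct Hor as [Hor|Hor]; [lia|]. right. apply Hor.
      - exists []. intros p [_ [[Hlen Hcc] Hor]] Ht. exfalso. apply Hnex.
        destruct (chain_S p m Hlen) as [k' [g' [q' [-> Hq']]]].
        simpl in Ht. eauto. }
    assert (HL : forall L : list (chain a b), exists l, forall p, in_PDn (S m) f p -> In (top2 p) L -> In p l).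
    { induction L as [|c L' [l' Hl']].
      - exists []. intros p _ [].
      - destruct (Hc c) as [lc Hlc]. exists (lc ++ l'). intros p Hp [Hin|Hin]; apply in_or_app.
        + left. apply Hlc; auto.
        + right. apply Hl'; auto. }
    destruct (HL L2) as [l Hl]. exists l. intros p Hp. apply Hl; auto.
    apply HL2.
    destruct Hp as [_ [[Hlen Hcc] Hor]].
    destruct (chain_S p m Hlen) as [k' [g' [q' [-> Hq']]]].
    destruct Hor as [Hor|[Hg Hq]]; [lia|].
    split; [lia|]. split; [split; [reflexivity|]|].
    + simpl. rewrite comp_id_r. exact Hcc.
    + right. simpl. split; [exact Hg|]. split; [|exact I].
      apply nonid_ccomp; auto. lia.
Qed.

Lemma Moeb_bound {C : Category} (HM : Moebius C) (a b : Ob C) (f : Hom C a b) :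
  exists N, forall p, in_PD f p -> clength p <= N.
Proof.
  destruct (HM a b f) as [l Hl].
  exists (fold_right (fun p acc => max (clength p) acc) 0 l).
  intros p Hp. specialize (Hl p Hp). clear Hp.
  induction l as [|x l IH]; simpl in *; [contradiction|].
  destruct Hl as [->|Hl]; [lia|]. specialize (IH Hl). lia.
Qed.

Fixpoint capp {C : Category} {a m b : Ob C} (p2 : chain m b) (p1 : chain a m) : chain a b :=
  match p2 in chain _ b0 return chain a b0 with
  | pnil => p1
  | pcons g q => pcons g (capp q p1)
  end.

Lemma capp_props {C : Category} {a m b : Ob C} (p2 : chain m b) (p1 : chain a m) :
  clength (capp p2 p1) = clength p2 + clength p1 /\
  ccomp (capp p2 p1) = comp (ccomp p2) (ccomp p1) /\
  (all_nonidentity p2 -> all_nonidentity p1 -> all_nonidentity (capp p2 p1)).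
Proof.
  induction p2 as [|k c g q IH]; simpl.
  - rewrite comp_id_l. auto.
  - destruct IH as [I1 [I2 I3]]. rewrite I1, I2, comp_assoc. split; [auto|]. split; [auto|]. tauto.
Qed.

Theorem theorem7p1 (C : Category) :
  Moebius C <->
  ( (forall (a b : Ob C) (f : Hom C a b), finite_set (in_PDn 2 f))
    /\ (forall (a : Ob C) (n : nat) (p : chain a a),
          2 <= n -> ~ in_PDn n (idm a) p)
    /\ (forall (x y : Ob C) (f : Hom C y y) (g : Hom C x y),
          comp f g = g -> is_identity f)
    /\ (forall (x y : Ob C) (f : Hom C x x) (g : Hom C x y),
          comp g f = g -> is_identity f) ).
Proof.
  split.
  - intro HM. split; [|split; [|split]].
    + intros a b f. destruct (HM a b f) as [l Hl]. exists l. intros p Hp. apply Hl. exists 2. exact Hp.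
    + intros a n p Hn [_ [[Hlen Hcc] Hor]].
      destruct Hor as [->|Hne]; [lia|].
      destruct (Moeb_bound HM a a (idm a)) as [N HN].
      assert (forall k, exists q : chain a a, clength q >= S k /\ ccomp q = idm a /\ all_nonidentity q) as Hk.
      { induction k as [|k [q [Q1 [Q2 Q3]]]].
        - exists p. repeat split; auto. lia.
        - exists (capp p q). destruct (capp_props p q) as [I1 [I2 I3]].
          rewrite I1, I2, Q2, Hcc, comp_id_l. repeat split; auto. lia. }
      destruct (Hk N) as [q [Q1 [Q2 Q3]]].
      assert (clength q <= N); [|lia].
      apply HN. exists (clength q). split; [lia|]. split; [split; auto|]. right; auto.
    + intros x y f g Hfg. destruct (classic (is_identity f)) as [|Hf]; [assumption|exfalso].
      destruct (classic (is_identity g)) as [Hg|Hg].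
      * assert (y = x) by exact (f_equal (fun u => snd (projT1 u)) Hg). subst y.
        apply inj_pair2 in Hg. subst g. rewrite comp_id_r in Hfg. subst f. apply Hf. reflexivity.
      * destruct (Moeb_bound HM x y g) as [N HN].
        assert (forall k, exists q : chain x y, clength q = S k /\ ccomp q = g /\ all_nonidentity q) as Hk.
        { induction k as [|k [q [Q1 [Q2 Q3]]]].
          - exists (pcons g pnil). simpl. rewrite comp_id_r. auto.
          - exists (pcons f q). simpl. rewrite Q1, Q2. auto. }
        destruct (Hk N) as [q [Q1 [Q2 Q3]]].
        assert (clength q <= N); [|lia].
        apply HN. exists (clength q). split; [lia|]. split; [split; auto|]. right; auto.
    + intros x y f g Hfg. destruct (classic (is_identity f)) as [|Hf]; [assumption|exfalso].
      destruct (classic (is_identity g)) as [Hg|Hg].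
      * assert (y = x) by exact (f_equal (fun u => snd (projT1 u)) Hg). subst y.
        apply inj_pair2 in Hg. subst g. rewrite comp_id_l in Hfg. subst f. apply Hf. reflexivity.
      * destruct (Moeb_bound HM x y g) as [N HN].
        assert (forall k, exists q : chain x x, clength q = k /\ comp g (ccomp q) = g /\ all_nonidentity q) as Hk.
        { induction k as [|k [q [Q1 [Q2 Q3]]]].
          - exists pnil. simpl. rewrite comp_id_r. auto.
          - exists (pcons f q). simpl. rewrite comp_assoc, Hfg, Q1, Q2. auto. }
        destruct (Hk N) as [q [Q1 [Q2 Q3]]].
        assert (clength (pcons g q) <= N); [|simpl in *; lia].
        apply HN. exists (clength (pcons g q)). split; [simpl; lia|].
        split; [split; auto|]. right; simpl; auto.
  - intros [H1 [H2 [H3 H4]]] a b f.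
    destruct (H1 a b f) as [L2 HL2].
    assert (HU : forall N, exists l, forall n p, 1 <= n <= N -> in_PDn n f p -> In p l).
    { induction N as [|N [l Hl]].
      - exists []. intros; lia.
      - destruct (PDn_fin H1 H2 (S N) a b f ltac:(lia)) as [l1 Hl1].
        exists (l ++ l1). intros n p Hn Hp. apply in_or_app.
        destruct (Nat.eq_dec n (S N)) as [->|Hne]; [right; auto|left; apply (Hl n); auto; lia]. }
    destruct (HU (S (length L2))) as [l Hl]. exists l.
    intros p [n Hp]. apply (Hl n); auto.
    split; [destruct Hp; lia|]. eapply PD_bound; eauto.
Qed.
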